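(* Let $X = [X_1 \; X_2] \in \mathbb{R}^{N\times P}$ with $X_1 \in \mathbb{R}^{N\times P_1}$, $X_2\in\mathbb{R}^{N\times P_2}$, $P = P_1+P_2$, and suppose the $N$-vector of ones $\mathbf{1}$ lies in the column span of $X_1$. Consider the hierarchical normal linear regression $$\mathbf{Y}\mid \boldsymbol\beta,\Phi \sim N(X_1\boldsymbol\beta_1 + X_2\boldsymbol\beta_2,\Phi),\quad \boldsymbol\beta_1\sim N(0,C),\quad \boldsymbol\beta_2\mid\Sigma\sim N(0,\Sigma),\quad \Sigma\sim f(\Sigma),\ \Phi\sim f(\Phi),$$ where $\Sigma\in\mathbb{R}^{P_2\times P_2}$ is positive definite and $\Phi\in\mathbb{R}^{N\times N}$ is diagonal and positive definite; in the Bayesian setting the prior densities $f(\Sigma)$, $f(\Phi)$ are such that the posterior is proper. Let $W$ be the $N\times N$ matrix of borrowing factors $$W = XVX'\Phi^{-1},\qquad V = \left(X'\Phi^{-1}X + \begin{bmatrix} C^{-1} & 0\\ 0 & \Sigma^{-1}\end{bmatrix}\right)^{-1},$$ where $C^{-1}$ is taken to be the $P_1\times P_1$ zero matrix. Then $\sum_{j=1}^N w_{ij} = 1$ for all $i=1,\dots,N$, i.e. $W\mathbf{1}=\mathbf{1}$.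
   Context: $w_{ij}$ denotes the $(i,j)$ entry of $W$ (the ''borrowing factor'' placed on $Y_j$ in the point estimate $\hat Y_i = (W\mathbf{Y})_i$). $W$ is defined for given values of $\Sigma$ and $\Phi$, and $V$ is assumed to exist (the displayed matrix is invertible). Setting $C^{-1}=0$ corresponds to giving the fixed effects $\boldsymbol\beta_1$ infinite prior variance. *)

(* Defs.v *)
From HB Require Import structures.
From mathcomp Require Import all_boot all_order all_algebra.
Set Implicit Arguments. Unset Strict Implicit. Unset Printing Implicit Defensive.
Import Order.TTheory GRing.Theory Num.Theory.
Local Open Scope ring_scope.

Definition posdef (R : realFieldType) (n : nat) (A : 'M[R]_n) : Prop :=
  A^T = A /\ forall u : 'rV[R]_n, u != 0 -> 0 < (u *m A *m u^T) 0 0.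

Definition diag_posdef (R : realFieldType) (n : nat) (A : 'M[R]_n) : Prop :=
  is_diag_mx A /\ forall i, 0 < A i i.

Definition prec_mx (R : realFieldType) (N P1 P2 : nat)
  (X1 : 'M[R]_(N, P1)) (X2 : 'M[R]_(N, P2)) (Sigma : 'M[R]_P2) (Phi : 'M[R]_N)
  : 'M[R]_(P1 + P2) :=
  (row_mx X1 X2)^T *m invmx Phi *m row_mx X1 X2
  + block_mx (0 : 'M[R]_(P1, P1)) 0 0 (invmx Sigma).

Definition V_mx (R : realFieldType) (N P1 P2 : nat)
  (X1 : 'M[R]_(N, P1)) (X2 : 'M[R]_(N, P2)) (Sigma : 'M[R]_P2) (Phi : 'M[R]_N) :=
  invmx (prec_mx X1 X2 Sigma Phi).

Definition W_mx (R : realFieldType) (N P1 P2 : nat)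
  (X1 : 'M[R]_(N, P1)) (X2 : 'M[R]_(N, P2)) (Sigma : 'M[R]_P2) (Phi : 'M[R]_N)
  : 'M[R]_N :=
  row_mx X1 X2 *m V_mx X1 X2 Sigma Phi *m (row_mx X1 X2)^T *m invmx Phi.

(* Main.v *)
Require Import Defs.
From HB Require Import structures.
From mathcomp Require Import all_boot all_order all_algebra.
Import Order.TTheory GRing.Theory Num.Theory.
Local Open Scope ring_scope.

Theorem theorem1 (R : realFieldType) (N P1 P2 : nat)
  (X1 : 'M[R]_(N, P1)) (X2 : 'M[R]_(N, P2)) (Sigma : 'M[R]_P2) (Phi : 'M[R]_N)
  (hspan : exists b : 'cV[R]_P1, X1 *m b = const_mx 1)
  (hSigma : posdef Sigma)
  (hPhi : diag_posdef Phi)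
  (hV : prec_mx X1 X2 Sigma Phi \in unitmx) :
  (forall i : 'I_N, \sum_(j < N) W_mx X1 X2 Sigma Phi i j = 1) /\
  W_mx X1 X2 Sigma Phi *m (const_mx 1 : 'cV[R]_N) = const_mx 1.
Proof.
have key : W_mx X1 X2 Sigma Phi *m (const_mx 1 : 'cV[R]_N) = const_mx 1.
  case: hspan => b hb.
  set e : 'cV[R]_(P1 + P2) := col_mx b 0.
  have hXe : row_mx X1 X2 *m e = const_mx 1.
    by rewrite /e mul_row_col mulmx0 addr0.
  have hMe : prec_mx X1 X2 Sigma Phi *m e
      = (row_mx X1 X2)^T *m invmx Phi *m const_mx 1.
    rewrite /prec_mx mulmxDl -!mulmxA hXe.
    rewrite /e mul_block_col !mul0mx mulmx0 !addr0 col_mx0 addr0 //.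
  rewrite /W_mx /V_mx -!mulmxA.
  have -> : (row_mx X1 X2)^T *m (invmx Phi *m const_mx 1)
      = prec_mx X1 X2 Sigma Phi *m e by rewrite hMe mulmxA.
  by rewrite (mulmxA (invmx _)) mulVmx // mul1mx hXe.
split => //.
move=> i; have := congr1 (fun M : 'cV[R]_N => M i 0) key.
rewrite !mxE /= => <-; apply: eq_bigr => j _; rewrite !mxE ?mulr1 //.
Qed.
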